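(* Let $(S^*,c_{\lim})$ be a measurement tuple with $m$ measurements, adjoint fields $c_1^*,\dots,c_m^*$, and let $J_+=\{j:c_{\lim,j}>0\}$ and $J_-=\{j:c_{\lim,j}<0\}$ both be nonempty (so $J_+\cup J_-=\{1,\dots,m\}$). Assume $0<\sup c_j^*<\infty$ for $j\in J_+$. Let $k_j>0$ and $0\le\beta_j\le\alpha_j$ for $j=1,\dots,m$, and $$\mathcal S=\bigcap_{j=1}^m\{S\in\mathcal M^+:\ \beta_jS\{c_j^*\ge k_j\}\le S\{c_j^*<k_j\}\le\alpha_jS\{c_j^*\ge k_j\}\}.$$ Then: (i) $Z=\bigcup_{j\in J_-}\{c_j^*\ge k_j\}$ is a posterior $(S^*,c_{\lim},\mathcal S,M_{Z,\lim})$-zero footprint with $M_{Z,\lim}=\sum_{j\in J_-}\dfrac{-c_{\lim,j}}{k_j+\beta_j\inf c_j^*}$; (ii) $F=\bigcup_{j\in J_+}\{c_j^*\ge k_j\}$ is a posterior $(S^*,c_{\lim},\mathcal S,M_{F,\lim})$-footprint with $M_{F,\lim}=\max_{j\in J_+}\dfrac{c_{\lim,j}}{k_j\alpha_j+\sup c_j^*}$; (iii) $F\setminus Z$ is a posterior $(S^*,c_{\lim},\mathcal S,M_{\lim})$-footprint with $$M_{\lim}=M_{F,\lim}-M_{Z,\lim}=\max_{j\in J_+}\frac{c_{\lim,j}}{k_j\alpha_j+\sup c_j^*}+\sum_{j\in J_-}\frac{c_{\lim,j}}{k_j+\beta_j\inf c_j^*}.$$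
   Context: Let $T\subset\mathbb{R}$ be a time interval, $V\subset\mathbb{R}^3$ a spatial domain, and $\mathcal M^+$ the set of positive measures on the Borel sets of $T\times V$. A measurement tuple consists of $m\ge1$ nonnegative measurable functions $c_1^*,\dots,c_m^*$ on $T\times V$ (the adjoint concentration fields $c_j^*(s,y)=\int_{T\times V}p(t,x;s,y)\,dS_j^*(t,x)$ of sensor probability measures $S_j^*$, $p$ being the transition probability of the dispersion; we write $S^*=(S_1^*,\dots,S_m^* )$) together with a vector $c_{\lim}=(c_{\lim,1},\dots,c_{\lim,m})$ of nonzero reals. Write $\langle S,c^*\rangle=\int c^*\,dS$. A measure $S\in\mathcal M^+$ satisfies the measurement condition for $(S^*,c_{\lim})$ if for every $j$: $\langle S,c_j^*\rangle\ge c_{\lim,j}$ when $c_{\lim,j}>0$ (detection), and $\langle S,c_j^*\rangle<|c_{\lim,j}|$ when $c_{\lim,j}<0$ (non-detection). Given an admissible class $\mathcal S\subseteq\mathcal M^+$ and $M_{\lim}\in\mathbb R$, a measurable set $A\subseteq T\times V$ is: a posterior $(S^*,c_{\lim},\mathcal S,M_{\lim})$-footprint if every $S\in\mathcal S$ satisfying the measurement condition has $S(A)\ge M_{\lim}$; a prior $(S^*,c_{\lim},\mathcal S,M_{\lim})$-footprint if every $S\in\mathcal S$ with $S(A)\ge M_{\lim}$ satisfies the measurement condition; a posterior $(S^*,c_{\lim},\mathcal S,M_{\lim})$-zero footprint if every $S\in\mathcal S$ satisfying the measurement condition has $S(A)<M_{\lim}$; a prior $(S^*,c_{\lim},\mathcal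 S,M_{\lim})$-zero footprint if every $S\in\mathcal S$ with $S(A)<M_{\lim}$ satisfies the measurement condition. Suprema, infima and level sets $\{c_j^*\ge k\}=\{(s,y):c_j^*(s,y)\ge k\}$ are over $T\times V$. *)

(* Defs.v *)
From HB Require Import structures.
From mathcomp Require Import all_boot all_order all_algebra.
From mathcomp Require Import all_classical all_reals all_analysis.
Set Implicit Arguments. Unset Strict Implicit. Unset Printing Implicit Defensive.
Import Order.TTheory GRing.Theory Num.Theory.
Local Open Scope classical_set_scope.
Local Open Scope ring_scope.

Section Footprints.
Context {R : realType} {d : measure_display} {X : measurableType d} {m : nat}.

Definition pairing (S : {measure set X -> \bar R}) (c : X -> R) : \bar R :=
  (\int[S]_x (c x)%:E)%E.

(* the measurement condition for (S^*, c_lim), the c_j^* being the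
   adjoint fields c j *)
Definition measurement_condition (c : 'I_m -> X -> R) (clim : 'I_m -> R)
    (S : {measure set X -> \bar R}) : Prop :=
  forall j : 'I_m,
    (0 < clim j -> ((clim j)%:E <= pairing S (c j))%E) /\
    (clim j < 0 -> (pairing S (c j) < (`|clim j|)%:E)%E).

Definition geset (f : X -> R) (k : R) : set X := [set x | k <= f x].
Definition ltset (f : X -> R) (k : R) : set X := [set x | f x < k].

Definition posterior_footprint (c : 'I_m -> X -> R) (clim : 'I_m -> R)
    (Sadm : set {measure set X -> \bar R}) (Mlim : R) (A : set X) : Prop :=
  measurable A /\
  forall S, Sadm S -> measurement_condition c clim S -> (Mlim%:E <= S A)%E.

Definition posterior_zero_footprint (c : 'I_m -> X -> R) (clim : 'I_m -> R)
    (Sadm : set {measure set X -> \bar R}) (Mlim : R) (A : set X) : Prop :=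
  measurable A /\
  forall S, Sadm S -> measurement_condition c clim S -> (S A < Mlim%:E)%E.

Definition ratio_class (c : 'I_m -> X -> R) (k alpha beta : 'I_m -> R) :
    set {measure set X -> \bar R} :=
  [set S | forall j : 'I_m,
     ((beta j)%:E * S (geset (c j) (k j)) <= S (ltset (c j) (k j)))%E /\
     (S (ltset (c j) (k j)) <= (alpha j)%:E * S (geset (c j) (k j)))%E].

End Footprints.

(* Main.v *)
Require Import Defs.
From HB Require Import structures.
From mathcomp Require Import all_boot all_order all_algebra.
From mathcomp Require Import all_classical all_reals all_analysis.
From mathcomp Require Import measurable_realfun.
From mathcomp Require Import ring lra.
Import Order.TTheory GRing.Theory Num.Theory.
Local Open Scope classical_set_scope.
Local Open Scope ring_scope.
Set Implicit Arguments. Unset Strict Implicit.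

Lemma geset_meas (R : realType) (d : measure_display) (X : measurableType d)
  (f : X -> R) (k : R) : measurable_fun setT f -> measurable (geset f k).
Proof.
move=> mf; have := mf measurableT _ (measurable_itv `[k, +oo[).
rewrite setTI; congr measurable; apply/seteqP; split => x /=;
  by rewrite /geset /= in_itv /= andbT.
Qed.

Lemma ltset_meas (R : realType) (d : measure_display) (X : measurableType d)
  (f : X -> R) (k : R) : measurable_fun setT f -> measurable (ltset f k).
Proof.
move=> mf; have := mf measurableT _ (measurable_itv `]-oo, k[).
rewrite setTI; congr measurable; apply/seteqP; split => x /=;
  by rewrite /ltset /= in_itv /=.
Qed.

Lemma pairing_split (R : realType) (d : measure_display) (X : measurableType d)
  (S : {measure set X -> \bar R}) (f : X -> R) (k : R) :
  measurable_fun setT f -> (forall x, 0 <= f x) ->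
  pairing S f = (\int[S]_(x in geset f k) (f x)%:E + \int[S]_(x in ltset f k) (f x)%:E)%E.
Proof.
move=> mf f0; rewrite /pairing.
have -> : [set: X] = geset f k `|` ltset f k.
  apply/seteqP; split => x //= _; rewrite /geset /ltset /=.
  by case: (leP k (f x)); [left|right].
apply: ge0_integral_setU.
- exact: geset_meas.
- exact: ltset_meas.
- apply/measurable_EFinP; apply: measurable_funS mf => //.
- by move=> x _; rewrite lee_fin.
- apply/disj_setPS => x [/= H1 H2]; rewrite /geset /ltset /= in H1 H2.
  by move: (le_lt_trans H1 H2); rewrite ltxx.
Qed.

Ltac solve_int mf :=
  first [ by move=> ? _; rewrite /= lee_fin
        | by apply/measurable_EFinP; apply: measurable_funS mf
        | exact: measurable_cst
        | by move=> ?; rewrite /geset /= lee_fin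
        | by move=> ?; rewrite /ltset /= lee_fin => /ltW
        | by move=> ? ?; rewrite /= lee_fin ].

Lemma pairing_lb (R : realType) (d : measure_display) (X : measurableType d)
  (S : {measure set X -> \bar R}) (f : X -> R) (k i : R) :
  measurable_fun setT f -> (forall x, 0 <= f x) -> 0 <= k -> 0 <= i ->
  (forall x, i <= f x) ->
  (k%:E * S (geset f k) + i%:E * S (ltset f k) <= pairing S f)%E.
Proof.
move=> mf f0 k0 i0 fi; rewrite (pairing_split S k mf f0).
have mG := geset_meas k mf; have mL := ltset_meas k mf.
apply: leeD; rewrite -integral_cst //; apply: ge0_le_integral => //; solve_int mf.
Qed.

Lemma pairing_ub (R : realType) (d : measure_display) (X : measurableType d)
  (S : {measure set X -> \bar R}) (f : X -> R) (k u : R) :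
  measurable_fun setT f -> (forall x, 0 <= f x) -> 0 <= k ->
  (forall x, f x <= u) ->
  (pairing S f <= u%:E * S (geset f k) + k%:E * S (ltset f k))%E.
Proof.
move=> mf f0 k0 fu; rewrite (pairing_split S k mf f0).
have mG := geset_meas k mf; have mL := ltset_meas k mf.
apply: leeD; rewrite -integral_cst //; apply: ge0_le_integral => //; solve_int mf.
Qed.

Lemma union_le (R : realType) (d : measure_display) (X : measurableType d)
  (S : {measure set X -> \bar R}) (I : eqType) (P : pred I) (G : I -> set X)
  (mG : forall i, measurable (G i)) (s : seq I) :
  measurable (\bigcup_(j in [set j | j \in s /\ P j]) G j) /\
  (S (\bigcup_(j in [set j | j \in s /\ P j]) G j) <= \sum_(j <- s | P j) S (G j))%E.
Proof.
elim: s => [|a s [mU IH]].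
  have -> : \bigcup_(j in [set j | j \in [::] /\ P j]) G j = set0.
    by apply/seteqP; split => x // [j /= [] ].
  by rewrite measure0 big_nil.
have -> : \bigcup_(j in [set j | j \in a :: s /\ P j]) G j =
   (if P a then G a else set0) `|` \bigcup_(j in [set j | j \in s /\ P j]) G j.
  apply/seteqP; split => x /=.
    move=> [j /= [] ]; rewrite inE => /orP [/eqP ->|js] Pj Gx.
      by left; rewrite Pj.
    by right; exists j.
  move=> [|[j /= [js Pj] Gx]].
    by case: ifP => // Pa Gx; exists a => //=; rewrite inE eqxx.
  by exists j => //=; rewrite inE js orbT.
split.
  by apply: measurableU => //; case: ifP.
rewrite big_cons; apply: le_trans (measureU2 _ _ _) _ => //.
  by case: ifP.
by case: ifP => _; [apply: leeD | rewrite measure0 add0e].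
Qed.

Lemma zero_bound (R : realType) (d : measure_display) (X : measurableType d)
  (S : {measure set X -> \bar R}) (f : X -> R) (k i b a : R) :
  measurable_fun setT f -> (forall x, 0 <= f x) -> 0 < k -> 0 <= i ->
  (forall x, i <= f x) -> 0 <= b ->
  (b%:E * S (geset f k) <= S (ltset f k))%E ->
  (pairing S f < a%:E)%E ->
  (S (geset f k) < (a / (k + b * i))%:E)%E.
Proof.
move=> mf f0 k0 i0 fi b0 hb hp.
have H := pairing_lb S mf f0 (ltW k0) i0 fi.
have hL : (i%:E * (b%:E * S (geset f k)) <= i%:E * S (ltset f k))%E.
  by apply: lee_wpmul2l; rewrite ?lee_fin.
move: hb hL H; have := measure_ge0 S (geset f k).
case: (S (geset f k)) => [r| |]// r0 hb hL H.
  have : ((k * r + i * (b * r))%:E < a%:E)%E.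
    apply: le_lt_trans hp; apply: le_trans H; rewrite EFinD.
    by rewrite !EFinM; apply: leeD.
  rewrite lte_fin => h; rewrite lte_fin ltr_pdivlMr; last first.
    by apply: ltr_wpDr => //; apply: mulr_ge0.
  by apply: le_lt_trans h; rewrite le_eqVlt; apply/orP; left; apply/eqP; ring.
exfalso; move: (le_lt_trans H hp).
rewrite gt0_muley ?lte_fin //.
have : (0 <= i%:E * S (ltset f k))%E by apply: mule_ge0; rewrite ?lee_fin.
by case: (i%:E * S (ltset f k))%E.
by rewrite ltNyr.
Qed.

Lemma pos_bound (R : realType) (d : measure_display) (X : measurableType d)
  (S : {measure set X -> \bar R}) (f : X -> R) (k u al a : R) :
  measurable_fun setT f -> (forall x, 0 <= f x) -> 0 < k -> 0 < u ->
  (forall x, f x <= u) -> 0 <= al ->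
  (S (ltset f k) <= al%:E * S (geset f k))%E ->
  (a%:E <= pairing S f)%E ->
  ((a / (k * al + u))%:E <= S (geset f k))%E.
Proof.
move=> mf f0 k0 u0 fu al0 ha hp.
have H := pairing_ub S (k:=k) mf f0 (ltW k0) fu.
have hL : (k%:E * S (ltset f k) <= k%:E * (al%:E * S (geset f k)))%E.
  by apply: lee_wpmul2l; rewrite ?lee_fin // ltW.
move: ha hL H; have := measure_ge0 S (geset f k).
case E: (S (geset f k)) => [r| |] r0 ha hL H.
all: try by rewrite leey.
2: by have : (0 <= S (geset f k))%E := measure_ge0 _ _; rewrite E.
have : (a%:E <= (u * r + k * (al * r))%:E)%E.
  apply: (le_trans hp); apply: le_trans H _; rewrite EFinD !EFinM.
  by apply: leeD.
rewrite !lee_fin => h; rewrite ler_pdivrMr; last first.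
  by apply: ltr_pwDr => //; apply: mulr_ge0 => //; apply: ltW.
by apply: le_trans h _; rewrite le_eqVlt; apply/orP; left; apply/eqP; ring.
Qed.

Lemma fin_lt (R : realType) (x : \bar R) (b : R) :
  (0 <= x)%E -> (x < b%:E)%E -> x \is a fin_num /\ fine x < b.
Proof.
case: x => [r| |] //= _; by rewrite lte_fin.
Qed.

Unset Implicit Arguments. Set Strict Implicit.

Theorem mainTheorem15 (R : realType) (d : measure_display) (X : measurableType d)
    (m : nat) (c : 'I_m -> X -> R) (clim : 'I_m -> R)
    (k alpha beta : 'I_m -> R) :
  (0 < m)%N ->
  (forall j, measurable_fun setT (c j)) ->
  (forall j x, 0 <= c j x) ->
  (forall j, clim j != 0) ->
  (exists j, 0 < clim j) ->
  (exists j, clim j < 0) ->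
  (forall j, 0 < clim j -> has_ubound (range (c j)) /\ 0 < sup (range (c j))) ->
  (forall j, 0 < k j) ->
  (forall j, 0 <= beta j /\ beta j <= alpha j) ->
  let Sadm := ratio_class c k alpha beta in
  let Z := \bigcup_(j in [set j | clim j < 0]) geset (c j) (k j) in
  let F := \bigcup_(j in [set j | 0 < clim j]) geset (c j) (k j) in
  let MZ := \sum_(j < m | clim j < 0)
              (- clim j) / (k j + beta j * inf (range (c j))) in
  let MF := \big[Num.max/0]_(j < m | 0 < clim j)
              (clim j / (k j * alpha j + sup (range (c j)))) in
  [/\ posterior_zero_footprint c clim Sadm MZ Z,
      posterior_footprint c clim Sadm MF F
    & posterior_footprint c clim Sadm (MF - MZ) (F `\` Z)].
Proof.
move=> m0 mc c0 cnz [jp hjp] [jn hjn] hsup k0 hab Sadm Z F MZ MF.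
have mG j : measurable (geset (c j) (k j)) by exact: geset_meas.
have hinf j : 0 <= inf (range (c j)) /\ forall x, inf (range (c j)) <= c j x.
  have hlb : has_lbound (range (c j)) by exists 0 => ? [x _ <-].
  split; last by move=> x; apply: ge_inf => //; exists x.
  have [[x _]|nx] := pselect (exists x : X, True).
    by apply: lb_le_inf; [exists (c j x), x | move=> ? [y _ <-]].
  have -> : range (c j) = set0.
    by apply/seteqP; split => // ? [x _ _]; apply: nx; exists x.
  by rewrite inf0.
have EZ : Z = \bigcup_(j in [set j | j \in index_enum 'I_m /\ (clim j < 0)])
    geset (c j) (k j).
  apply/seteqP; split => x [j /= hj Gx]; exists j => //=.
    by split => //; exact: mem_index_enum.
  by case: hj.
have EF : F = \bigcup_(j in [set j | j \in index_enum 'I_m /\ (0 < clim j)])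
    geset (c j) (k j).
  apply/seteqP; split => x [j /= hj Gx]; exists j => //=.
    by split => //; exact: mem_index_enum.
  by case: hj.
have mZ : measurable Z.
  by rewrite EZ; case: (union_le (@mzero d X R) (fun j => clim j < 0) mG (index_enum 'I_m)).
have mF : measurable F.
  by rewrite EF; case: (union_le (@mzero d X R) (fun j => 0 < clim j) mG (index_enum 'I_m)).
have partI : forall S, Sadm S -> measurement_condition c clim S ->
    (S Z < MZ%:E)%E.
  move=> S hS hmc.
  have hj j : clim j < 0 -> (S (geset (c j) (k j)) <
      ((- clim j) / (k j + beta j * inf (range (c j))))%:E)%E.
    move=> hj; have [h1 h2] := hinf j.
    apply: zero_bound => //; first by case: (hab j).
      by case: (hS j).
    by rewrite -(ltr0_norm hj); apply: (hmc j).2.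
  have := (union_le S (fun j => clim j < 0) mG (index_enum 'I_m)).2.
  rewrite -EZ => hle; apply: le_lt_trans hle _.
  rewrite -EFin_sum_fine; last first.
    move=> j /hj h; exact: (fin_lt (measure_ge0 S _) h).1.
  rewrite lte_fin /MZ; apply: ltr_sum.
    by apply/hasP; exists jn => //; exact: mem_index_enum.
  move=> j /hj h; exact: (fin_lt (measure_ge0 S _) h).2.
have partII : forall S, Sadm S -> measurement_condition c clim S ->
    (MF%:E <= S F)%E.
  move=> S hS hmc; rewrite /MF.
  apply: (big_ind (fun y : R => (y%:E <= S F)%E)).
  - exact: measure_ge0.
  - by move=> x y hx hy; rewrite maxEle; case: ifP.
  move=> j hj; have [hub hs] := hsup j hj.
  apply: (le_trans (y := S (geset (c j) (k j)))).
    apply: pos_bound => //.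
    - by move=> x; apply: ub_le_sup => //; exists x.
    - by have [h1 h2] := hab j; apply: le_trans h2.
    - by case: (hS j).
    - by apply: (hmc j).1.
  apply: le_measure; rewrite ?inE //.
  by move=> x Gx; exists j.
split.
- by split => // S hS hmc; apply: partI.
- by split => // S hS hmc; apply: partII.
split; first exact: measurableD.
move=> S hS hmc.
have h1 := partI S hS hmc; have h2 := partII S hS hmc.
have mFZ : measurable (F `\` Z) by exact: measurableD.
have h3 : (S F <= S (F `\` Z) + S Z)%E.
  apply: le_trans (measureU2 _ mFZ mZ).
  apply: le_measure; rewrite ?inE //; first exact: measurableU.
  by move=> x Fx; case: (pselect (Z x)) => hx; [right|left].
have [finZ ltZ] := fin_lt (measure_ge0 S _) h1.
move: h3; rewrite -(fineK finZ).
have : (0 <= S (F `\` Z))%E := measure_ge0 _ _.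
case: (S (F `\` Z)) => [w| |] // w0 h3.
  move: (le_trans h2 h3); rewrite -EFinD lee_fin => h4.
  rewrite lee_fin; lra.
by rewrite leey.
Qed.
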